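(* The length complexity of $\mathsf{C\text{-}RASP}_+$ (with $\mathsf{C\text{-}RASP}_+$ programs as representations and program size as descriptional complexity) is exponential in the size of the program: there is a polynomial $q$ such that any two $\mathsf{C\text{-}RASP}_+$ programs of size at most $c$ defining different languages are distinguished by a string of length at most $2^{q(c)}$, and exponential length is needed in the worst case.
   Context: $\mathsf{C\text{-}RASP}_+$ formulas over a finite alphabet $\Sigma$: $\phi ::= \sigma \mid \neg\phi \mid \phi_1\wedge\phi_2 \mid \sum_{t\in\mathcal T}\alpha_t t\sim k$, terms $t ::= \#[\phi] \mid c$, with $\sigma\in\Sigma$, $\alpha_t,k,c\in\mathbb{N}$, ${\sim}\in\{\ge,>,=,<,\le\}$. At position $i$ of $w$: $w,i\models\sigma$ iff $w_i=\sigma$; Boolean connectives as usual; $\#[\phi]$ evaluates to $|\{j\in[1,i]: w,j\models\phi\}|$, $c$ to $c$, comparisons are integer comparisons. $w\models\phi$ iff $w,|w|\models\phi$; $L(\phi)=\{w:w\models\phi\}$. Programs are straight-line (DAG) representations with references to earlier lines; size is the number of symbols with constants in binary and references counted as 1. The length complexity is $f(c)=\max\{\min\{|w| : w\in L(E)\setminus L(E')\} : E,E' \text{ programs of size}\le c,\ L(E)\setminus L(E')\neq\emptyset\}$. *)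

(* Defs.v *)
From mathcomp Require Import all_boot.
Set Implicit Arguments. Unset Strict Implicit. Unset Printing Implicit Defensive.

Inductive cmpop := CGe | CGt | CEq | CLt | CLe.

Definition cmp_eval (o : cmpop) (x y : nat) : bool :=
  match o with
  | CGe => y <= x | CGt => y < x | CEq => x == y | CLt => x < y | CLe => x <= y
  end.

(* Terms: #[phi] where phi is a reference to an earlier line, or a constant c. *)
Inductive term := TCount of nat | TConst of nat.

(* One line of a straight-line C-RASP_+ program.  References are indices
   (0-based) of earlier lines. *)
Inductive node (Sigma : Type) :=
  | NSym of Sigma
  | NNot of nat
  | NAnd of nat & nat
  | NCmp of seq (nat * term) & cmpop & nat.  (* sum_t alpha_t t  ~  k *)

Definition program (Sigma : Type) := seq (node Sigma).

Definition refs_ok (k : nat) (t : term) : bool :=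
  if t is TCount j then j < k else true.

Definition node_wf Sigma (k : nat) (n : node Sigma) : bool :=
  match n with
  | NSym _ => true
  | NNot i => i < k
  | NAnd i j => (i < k) && (j < k)
  | NCmp ts _ _ => all (fun p => refs_ok k p.2) ts
  end.

Definition wf Sigma (E : program Sigma) : bool :=
  (0 < size E) && all (fun p => node_wf p.1 p.2) (zip (iota 0 (size E)) E).

(* positions are 1-based: w,i |= sigma iff w_i = sigma (false at i = 0) *)
Definition sym_at (Sigma : eqType) (w : seq Sigma) (s : Sigma) (i : nat) : bool :=
  (0 < i) && (nth None (map Some w) i.-1 == Some s).

Definition count_upto (f : nat -> bool) (i : nat) : nat :=
  \sum_(1 <= j < i.+1) f j.

Definition term_val (vals : seq (nat -> bool)) (t : term) (i : nat) : nat :=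
  match t with
  | TCount j => count_upto (nth (fun _ => false) vals j) i
  | TConst c => c
  end.

Definition node_eval (Sigma : eqType) (w : seq Sigma) (vals : seq (nat -> bool))
    (n : node Sigma) : nat -> bool :=
  match n with
  | NSym s => sym_at w s
  | NNot i => fun p => ~~ nth (fun _ => false) vals i p
  | NAnd i j => fun p => nth (fun _ => false) vals i p && nth (fun _ => false) vals j p
  | NCmp ts o k => fun p =>
      cmp_eval o (\sum_(a <- ts) a.1 * term_val vals a.2 p) k
  end.

Definition prog_vals (Sigma : eqType) (w : seq Sigma) (E : program Sigma)
  : seq (nat -> bool) :=
  foldl (fun vals n => rcons vals (node_eval w vals n)) [::] E.

Definition accepts (Sigma : eqType) (E : program Sigma) (w : seq Sigma) : bool :=
  last (fun _ => false) (prog_vals w E) (size w).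

(* length of the binary representation of n (bits 0 = 1) *)
Definition bits (n : nat) : nat := (trunc_log 2 n).+1.

Definition term_size (t : term) : nat :=
  match t with
  | TCount _ => 2          (* the symbol # and one reference *)
  | TConst c => bits c
  end.

Definition node_size Sigma (n : node Sigma) : nat :=
  match n with
  | NSym _ => 1
  | NNot _ => 2            (* ~ and a reference *)
  | NAnd _ _ => 3          (* /\ and two references *)
  | NCmp ts _ k =>
      1 + bits k + \sum_(a <- ts) (1 + bits a.1 + term_size a.2)
      (* relation symbol, constant k, and per summand: a '+' , alpha, term *)
  end.

Definition psize Sigma (E : program Sigma) : nat := \sum_(n <- E) node_size n.

(* polynomial with natural coefficients (constant coefficient first) *)
Definition polyval (q : seq nat) (c : nat) : nat := foldr (fun a acc => a + c * acc) 0 q.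

(* Main.v *)
Require Import Defs.
From mathcomp Require Import all_boot zify.
Set Implicit Arguments. Unset Strict Implicit. Unset Printing Implicit Defensive.

Definition dF : nat -> bool := fun _ => false.

Lemma countS (f : nat -> bool) i : count_upto f i.+1 = count_upto f i + f i.+1.
Proof. by rewrite /count_upto big_nat_recr. Qed.

Lemma count0 (f : nat -> bool) : count_upto f 0 = 0.
Proof. by rewrite /count_upto big_geq. Qed.

Lemma count_ext (f g : nat -> bool) p :
  (forall q, q <= p -> f q = g q) -> count_upto f p = count_upto g p.
Proof.
elim: p => [|p IH] H; first by rewrite !count0.
rewrite !countS IH ?H // => q Hq; apply: H; lia.
Qed.

Lemma count_le (f : nat -> bool) p : count_upto f p <= p.
Proof. elim: p => [|p IH]; rewrite ?count0 // countS; case: (f p.+1) => /=; lia. Qed.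

Lemma count_mono (f : nat -> bool) p : count_upto f p <= count_upto f p.+1.
Proof. rewrite countS; lia. Qed.

Lemma count_all (f : nat -> bool) p : (forall q, 0 < q <= p -> f q) -> count_upto f p = p.
Proof.
elim: p => [|p IH] H; first by rewrite count0.
rewrite countS IH ?H //; try lia. move=> q Hq; apply: H; lia.
Qed.

Lemma cnt_shift (f g : nat -> bool) M n0 :
  (forall q, q <= n0 -> f q = g q) ->
  (forall q, n0 < q -> f q.+1 = g q) ->
  minn (count_upto f n0.+1) M = minn (count_upto f n0) M ->
  forall p, n0 <= p -> minn (count_upto f p.+1) M = minn (count_upto g p) M.
Proof.
move=> Hpre Hs H0; elim=> [|p IH] Hp.
  have E : n0 = 0 by lia. subst n0. by rewrite H0 (count_ext Hpre).
case: (ltnP n0 p.+1) => Hlt; last first.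
  have E : n0 = p.+1 by lia. subst n0. by rewrite H0 (count_ext Hpre).
have IH' := IH (ltnSE Hlt).
rewrite (countS f p.+1) (countS g p) (Hs p.+1 Hlt).
move: IH'; move: (count_upto f p.+1) (count_upto g p) (g p.+1) => x y [] /=; lia.
Qed.

Lemma cmp_cap o S k M : k < M -> cmp_eval o S k = cmp_eval o (minn S M) k.
Proof. move=> HkM; case: o => /=; case: (leqP S M) => H; try (have -> : minn S M = S by lia); try (have -> : minn S M = M by lia); try lia; apply/eqP; lia. Qed.

Lemma mul_cap al x y M : minn x M = minn y M -> minn (al * x) M = minn (al * y) M.
Proof.
move=> H; have [->|[H1 H2]] : x = y \/ (M <= x /\ M <= y) by lia. by [].
case: al => [|al]; first by rewrite !mul0n.
have : M <= al.+1 * x by nia. have : M <= al.+1 * y by nia. lia.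
Qed.

Lemma sum_ext_all (A : Type) (ts : seq A) (P : pred A) (F G : A -> nat) :
  all P ts -> (forall a, P a -> F a = G a) ->
  \sum_(a <- ts) F a = \sum_(a <- ts) G a.
Proof.
elim: ts => [|t ts IH] /=; first by rewrite !big_nil.
move=> /andP[Pt Pts] H; rewrite !big_cons H // IH //.
Qed.

Lemma sum_cap_all (ts : seq (nat * term)) (P : pred (nat * term)) (F G : nat * term -> nat) M :
  all P ts -> (forall a, P a -> minn (F a) M = minn (G a) M) ->
  minn (\sum_(a <- ts) a.1 * F a) M = minn (\sum_(a <- ts) a.1 * G a) M.
Proof.
elim: ts => [|t ts IH] /=; first by rewrite !big_nil.
move=> /andP[Pt Pts] H; rewrite !big_cons.
have H1 := mul_cap t.1 (H t Pt). have H2 := IH Pts H.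
move: H1 H2; move: (t.1 * F t) (t.1 * G t) (\sum_(a <- ts) a.1 * F a) (\sum_(a <- ts) a.1 * G a) => a b c d; lia.
Qed.

Lemma node_eval_ext (Sigma : eqType) (w : seq Sigma) v1 v2 k (n : node Sigma) p :
  node_wf k n -> (forall i, i < k -> nth dF v1 i = nth dF v2 i) ->
  node_eval w v1 n p = node_eval w v2 n p.
Proof.
case: n => [s|i|i j|ts o kk] /=.
- by [].
- by move=> Hi H; rewrite H.
- by move=> /andP[Hi Hj] H; rewrite !H.
- move=> Hall H; congr cmp_eval.
  apply: (sum_ext_all Hall) => -[al [r|c]] //= Hr.
  by rewrite H.
Qed.

Definition pstep (Sigma : eqType) (w : seq Sigma) :=
  fun vals (n : node Sigma) => rcons vals (node_eval w vals n).

Lemma pv_gen (Sigma : eqType) (w : seq Sigma) (E : program Sigma) vals0 :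
  let R := foldl (pstep w) vals0 E in
  [/\ size R = size vals0 + size E,
      (forall i, i < size vals0 -> nth dF R i = nth dF vals0 i) &
      (forall j, j < size E -> node_wf (size vals0 + j) (nth (NNot Sigma 0) E j) ->
         forall p, nth dF R (size vals0 + j) p = node_eval w R (nth (NNot Sigma 0) E j) p)].
Proof.
elim: E vals0 => [|n E IH] vals0 /=.
  split => //; by rewrite addn0.
set vals1 := rcons vals0 (node_eval w vals0 n).
have [Hs Hp Hn] := IH vals1.
have Hs1 : size vals1 = (size vals0).+1 by rewrite size_rcons.
have Hp0 : forall i, i < size vals0 -> nth dF (foldl (pstep w) vals1 E) i = nth dF vals0 i.
  move=> i Hi; rewrite Hp ?Hs1 1?ltnW // /vals1 nth_rcons Hi //.
split.
- by rewrite Hs Hs1 addSnnS.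
- exact: Hp0.
- case=> [|j] Hj Hwf p.
  + rewrite addn0 Hp ?Hs1 // /vals1 nth_rcons ltnn eqxx.
    apply: (node_eval_ext _ (k := size vals0)); first by rewrite addn0 in Hwf.
    by move=> i Hi; rewrite Hp0.
  + rewrite -addSnnS -Hs1 Hn //; by rewrite Hs1 addSnnS.
Qed.

Definition V (Sigma : eqType) (w : seq Sigma) (E : program Sigma) j := nth dF (prog_vals w E) j.

Lemma size_pv (Sigma : eqType) (w : seq Sigma) (E : program Sigma) : size (prog_vals w E) = size E.
Proof. by have [H _ _] := pv_gen w E [::]. Qed.

Lemma wf_nth (Sigma : eqType) (E : program Sigma) j :
  wf E -> j < size E -> node_wf j (nth (NNot Sigma 0) E j).
Proof.
move=> /andP[_ /(all_nthP (0, NNot Sigma 0)) H] Hj.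
have := H j; rewrite size_zip size_iota minnn => /(_ Hj).
by rewrite nth_zip ?size_iota //= nth_iota.
Qed.

Lemma V_node (Sigma : eqType) (w : seq Sigma) (E : program Sigma) j p :
  wf E -> j < size E ->
  V w E j p = node_eval w (prog_vals w E) (nth (NNot Sigma 0) E j) p.
Proof.
move=> Hwf Hj; have [_ _ H] := pv_gen w E [::].
by have := H j Hj (wf_nth Hwf Hj) p.
Qed.

Lemma V_out (Sigma : eqType) (w : seq Sigma) (E : program Sigma) j p :
  size E <= j -> V w E j p = false.
Proof. by move=> Hj; rewrite /V nth_default // size_pv. Qed.

Lemma accepts_V (Sigma : eqType) (E : program Sigma) (w : seq Sigma) :
  accepts E w = V w E (size E).-1 (size w).
Proof. by rewrite /accepts /V -nth_last size_pv. Qed.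

Lemma sym_prefix (Sigma : eqType) (a y z : seq Sigma) s p :
  p <= size a -> sym_at (a ++ y) s p = sym_at (a ++ z) s p.
Proof.
rewrite /sym_at; case: p => [|p] //= Hp.
by rewrite !map_cat !nth_cat size_map Hp.
Qed.

Lemma V_prefix (Sigma : eqType) (E : program Sigma) (a y z : seq Sigma) j p :
  wf E -> p <= size a -> V (a ++ y) E j p = V (a ++ z) E j p.
Proof.
move=> Hwf; elim/ltn_ind: j p => j IH p Hp.
case: (ltnP j (size E)) => Hj; last by rewrite !V_out.
rewrite !V_node //; have := wf_nth Hwf Hj; rewrite /V /dF in IH *.
case: (nth _ E j) => [s|i|i k|ts o kk] /=.
- by move=> _; apply: sym_prefix.
- by move=> Hi; rewrite (IH i Hi).
- by move=> /andP[Hi Hk]; rewrite (IH i Hi) ?(IH k Hk).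
- move=> Hall; congr cmp_eval.
  apply: (sum_ext_all Hall) => -[al [r|c]] //= Hr.
  congr (_ * _); apply: count_ext => q Hq.
  by rewrite IH //; apply: leq_trans Hp.
Qed.

Definition consts_lt (Sigma : Type) (E : program Sigma) M :=
  forall j ts o k, j < size E -> nth (NNot Sigma 0) E j = NCmp Sigma ts o k -> k < M.

Lemma sym_shift (Sigma : eqType) (a b : seq Sigma) x s p :
  size a < p -> sym_at (a ++ x :: b) s p.+1 = sym_at (a ++ b) s p.
Proof.
rewrite /sym_at; case: p => [|p] //= Hp.
rewrite !map_cat !nth_cat !size_map.
have -> : (p.+1 < size a) = false by lia.
have -> : (p < size a) = false by lia.
have -> : p.+1 - size a = (p - size a).+1 by lia.
by [].
Qed.

Lemma V_shift (Sigma : eqType) (E : program Sigma) (a b : seq Sigma) x M :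
  wf E -> consts_lt E M ->
  (forall j, j < size E ->
     minn (count_upto (V (a ++ x :: b) E j) (size a).+1) M =
     minn (count_upto (V (a ++ x :: b) E j) (size a)) M) ->
  forall j p, size a < p -> V (a ++ x :: b) E j p.+1 = V (a ++ b) E j p.
Proof.
move=> Hwf Hc H0; elim/ltn_ind => j IH p Hp.
case: (ltnP j (size E)) => Hj; last by rewrite !V_out.
have Hcnt : forall r, r < j -> forall q, size a <= q ->
   minn (count_upto (V (a ++ x :: b) E r) q.+1) M = minn (count_upto (V (a ++ b) E r) q) M.
  move=> r Hr; apply: cnt_shift.
  - by move=> q Hq; apply: V_prefix.
  - by move=> q Hq; apply: IH.
  - by apply: H0; apply: ltn_trans Hj.
rewrite !V_node //; have := wf_nth Hwf Hj; rewrite /V /dF in IH *.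
have := Hc j; case: (nth _ E j) => [s|i|i k|ts o kk] /= Hck.
- by move=> _; apply: sym_shift.
- by move=> Hi; rewrite (IH i Hi).
- by move=> /andP[Hi Hk]; rewrite (IH i Hi) ?(IH k Hk).
- move=> Hall; have HkM := Hck ts o kk Hj erefl.
  rewrite (cmp_cap _ _ HkM) [in RHS](cmp_cap _ _ HkM); congr cmp_eval.
  apply: (sum_cap_all Hall) => -[al [r|c]] //= Hr.
  apply: Hcnt => //; lia.
Qed.

Lemma delete_acc (Sigma : eqType) (E : program Sigma) M (w : seq Sigma) i :
  wf E -> consts_lt E M -> i.+1 < size w ->
  (forall j, j < size E -> minn (count_upto (V w E j) i.+1) M = minn (count_upto (V w E j) i) M) ->
  accepts E w = accepts E (take i w ++ drop i.+1 w).
Proof.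
move=> Hwf Hc Hi H.
case Ed: (drop i w) => [|x b].
  by have := size_drop i w; rewrite Ed /=; lia.
have Eb : drop i.+1 w = b.
  by rewrite -add1n -drop_drop Ed /= drop0.
have Ew : w = take i w ++ x :: b by rewrite -Ed cat_take_drop.
have Ha : size (take i w) = i by rewrite size_take; case: ltnP => //; lia.
have Hb : 0 < size b by have := size_drop i w; rewrite Ed /=; lia.
suff key : forall a, size a = i ->
    (forall j, j < size E -> minn (count_upto (V (a ++ x :: b) E j) (size a).+1) M =
                             minn (count_upto (V (a ++ x :: b) E j) (size a)) M) ->
    accepts E (a ++ x :: b) = accepts E (a ++ b).
  rewrite Eb {1}Ew; apply: key => // j Hj; rewrite -Ew Ha; exact: H.
move=> a Ha' H'.
rewrite !accepts_V size_cat /= addnS.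
rewrite (V_shift Hwf Hc H') ?size_cat //; lia.
Qed.

Lemma sum_le_const (F : nat -> nat) M m : (forall j, F j <= M) -> \sum_(0 <= j < m) F j <= m * M.
Proof.
move=> H; elim: m => [|m IH]; first by rewrite big_geq.
rewrite big_nat_recr //= mulSn; have := H m; lia.
Qed.

Lemma sum_mono (F G : nat -> nat) m : (forall j, F j <= G j) -> \sum_(0 <= j < m) F j <= \sum_(0 <= j < m) G j.
Proof.
move=> H; elim: m => [|m IH]; first by rewrite !big_geq.
rewrite !big_nat_recr //=; have := H m; lia.
Qed.

Lemma sum_mono_eq (F G : nat -> nat) m : (forall j, F j <= G j) ->
  \sum_(0 <= j < m) F j = \sum_(0 <= j < m) G j -> forall j, j < m -> F j = G j.
Proof.
move=> H; elim: m => [|m IH] //.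
rewrite !big_nat_recr //= => Heq j Hj.
have := sum_mono m H; have := H m => h1 h2.
have Hm : F m = G m by lia.
case: (ltnP j m) => Hjm; last by have -> : j = m by lia.
apply: IH => //; lia.
Qed.

Definition phi (Sigma : eqType) (E : program Sigma) M (w : seq Sigma) i :=
  \sum_(0 <= j < size E) minn (count_upto (V w E j) i) M.

Lemma phi_mono (Sigma : eqType) (E : program Sigma) M w i : phi E M w i <= phi E M w i.+1.
Proof. apply: sum_mono => j; have := count_mono (V w E j) i; lia. Qed.

Lemma phi_le (Sigma : eqType) (E : program Sigma) M w i : phi E M w i <= size E * M.
Proof. apply: sum_le_const => j; lia. Qed.

Lemma phi_eq (Sigma : eqType) (E : program Sigma) M w i : phi E M w i.+1 = phi E M w i ->
  forall j, j < size E -> minn (count_upto (V w E j) i.+1) M = minn (count_upto (V w E j) i) M.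
Proof.
move=> H j Hj; symmetry.
apply: (@sum_mono_eq (fun j => minn (count_upto (V w E j) i) M) (fun j => minn (count_upto (V w E j) i.+1) M) (size E)) => //.
  move=> k; have := count_mono (V w E k) i; lia.
Qed.

Lemma chain (f : nat -> nat) (Hm : forall i, f i <= f i.+1) m :
  m <= f m \/ exists i, i.+1 <= m /\ f i.+1 = f i.
Proof.
elim: m => [|m [IH|IH]]; first by left.
- case: (eqVneq (f m.+1) (f m)) => H.
  + by right; exists m.
  + left; have := Hm m; lia.
- by right; case: IH => i [H1 H2]; exists i; split => //; lia.
Qed.

Lemma upper (Sigma : eqType) (E E' : program Sigma) M :
  wf E -> wf E' -> consts_lt E M -> consts_lt E' M ->
  forall n (w : seq Sigma), size w = n -> accepts E w && ~~ accepts E' w ->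
  exists w', accepts E w' && ~~ accepts E' w' && (size w' <= (size E + size E') * M + 1).
Proof.
move=> Hw Hw' Hc Hc'; elim/ltn_ind => n IH w Hn Hacc.
case: (leqP n ((size E + size E') * M + 1)) => Hsz.
  by exists w; rewrite Hacc Hn.
pose f i := phi E M w i + phi E' M w i.
have Hm : forall i, f i <= f i.+1.
  by move=> i; rewrite /f; have := phi_mono E M w i; have := phi_mono E' M w i; lia.
have [H|[i [Hi Hf]]] := chain Hm n.-1.
  have := phi_le E M w n.-1; have := phi_le E' M w n.-1; rewrite /f in H.
  rewrite mulnDl in Hsz; lia.
have H1 : phi E M w i.+1 = phi E M w i.
  by move: Hf; rewrite /f; have := phi_mono E M w i; have := phi_mono E' M w i; lia.
have H2 : phi E' M w i.+1 = phi E' M w i.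
  by move: Hf; rewrite /f; have := phi_mono E M w i; have := phi_mono E' M w i; lia.
have Hi' : i.+1 < size w by lia.
rewrite (delete_acc Hw Hc Hi' (phi_eq H1)) (delete_acc Hw' Hc' Hi' (phi_eq H2)) in Hacc.
apply: (IH _ _ _ erefl Hacc).
rewrite size_cat size_take size_drop (_ : i < size w = true); [clear f Hm Hf; lia | clear f Hm Hf; lia].
Qed.

Lemma size_le_psize (Sigma : Type) (E : program Sigma) : size E <= psize E.
Proof.
rewrite /psize; elim: E => [|n E IH] /=; first by rewrite big_nil.
rewrite big_cons; have : 0 < node_size n by case: n.
lia.
Qed.

Lemma nth_le_psize (Sigma : Type) (E : program Sigma) j :
  j < size E -> node_size (nth (NNot Sigma 0) E j) <= psize E.
Proof.
rewrite /psize; elim: E j => [|n E IH] [|j] //= Hj; rewrite big_cons.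
  lia.
have := IH j Hj; lia.
Qed.

Lemma consts_psize (Sigma : Type) (E : program Sigma) c :
  psize E <= c -> consts_lt E (2 ^ c).
Proof.
move=> Hc j ts o k Hj Hn.
have := nth_le_psize Hj; rewrite Hn /= => Hs.
have Hb : bits k <= c by lia.
apply: (leq_trans (trunc_log_ltn k (isT : 1 < 2))).
by rewrite leq_exp2l.
Qed.

Lemma bits_pow m : bits (2 ^ m) = m.+1.
Proof. by rewrite /bits trunc_expnK. Qed.

Theorem theorem4p7 (Sigma : finType) (hSigma : 0 < #|Sigma|) :
  (* upper bound: f(c) <= 2^(q(c)) for a polynomial q *)
  (exists q : seq nat,
     forall (c : nat) (E E' : program Sigma),
       wf E -> wf E' -> psize E <= c -> psize E' <= c ->
       (exists w : seq Sigma, accepts E w && ~~ accepts E' w) ->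
       exists w : seq Sigma,
         [&& accepts E w, ~~ accepts E' w & size w <= 2 ^ polyval q c])
  /\
  (* lower bound: f(c) >= 2^(c/d) for all large c *)
  (exists d : nat, 0 < d /\
     forall c : nat, d <= c ->
       exists E E' : program Sigma,
         [/\ wf E && wf E', psize E <= c, psize E' <= c,
             (exists w : seq Sigma, accepts E w && ~~ accepts E' w) &
             forall w : seq Sigma, accepts E w && ~~ accepts E' w ->
               2 ^ (c %/ d) <= size w]).
Proof.
split.
  exists [:: 2; 2] => c E E' Hw Hw' Hs Hs' [w Hacc].
  have [w' /andP[Hacc' Hsz]] := upper Hw Hw' (consts_psize Hs) (consts_psize Hs') erefl Hacc.
  exists w'; move: Hacc' => /andP[-> ->] /=.
  apply: (leq_trans Hsz).
  have h1 := size_le_psize E; have h2 := size_le_psize E'.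
  have hX : c < 2 ^ c by apply: ltn_expl.
  rewrite /= muln0 addn0 expnD (_ : c * 2 = c + c); last by lia. rewrite expnD.
  move: hX; move: (2 ^ c) => X hX; rewrite (_ : 2 ^ 2 = 4) //; nia.
exists 8; split => // c Hc.
case/card_gt0P: hSigma => s _.
set m := c %/ 8.
have Hm : m * 8 <= c by apply: leq_divM.
exists [:: NSym s; NCmp Sigma [:: (1, TCount 0)] CGe (2 ^ m)].
exists [:: NSym s; NCmp Sigma [::] CLt 0].
have accE : forall w : seq Sigma, accepts [:: NSym s; NCmp Sigma [:: (1, TCount 0)] CGe (2 ^ m)] w =
   (2 ^ m <= count_upto (sym_at w s) (size w)).
  by move=> w; rewrite /accepts /prog_vals /= big_cons big_nil mul1n addn0.
have accE' : forall w : seq Sigma, accepts [:: NSym s; NCmp Sigma [::] CLt 0] w = false.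
  by move=> w; rewrite /accepts /prog_vals /= big_nil.
split => //.
- rewrite /psize !big_cons big_nil /= bits_pow.
  rewrite big_cons big_nil /=. rewrite (_ : bits 1 = 1) //. lia.
- rewrite /psize !big_cons big_nil /=.
  rewrite ?big_nil (_ : bits 0 = 1) //. lia.
- exists (nseq (2 ^ m) s); rewrite accE accE' andbT size_nseq count_all //.
  move=> q /andP[Hq1 Hq2]; rewrite /sym_at Hq1 /= map_nseq nth_nseq.
  by rewrite (_ : q.-1 < 2 ^ m = true) //; lia.
- move=> w; rewrite accE accE' andbT => H.
  exact: (leq_trans H (count_le _ _)).
Qed.
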